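(* Fix an attacker label $A\in\mathcal{L}$. For all labels $pc$, all partial bijections $\beta$, all initial configurations $c_1,c_2$ and environments $\theta_1,\theta_2$ of $\lambda^{dFG}$ extended with flow-sensitive references such that $\vdash\mathbf{Valid}(c_1,\theta_1)$, $\vdash\mathbf{Valid}(c_2,\theta_2)$, $c_1\approx^{\beta}_A c_2$ and $\theta_1\approx^{\beta}_A\theta_2$: if $c_1\Downarrow^{\theta_1}_{pc}c_1'$ and $c_2\Downarrow^{\theta_2}_{pc}c_2'$, then there exists a partial bijection $\beta'\supseteq\beta$ such that $c_1'\approx^{\beta'}_A c_2'$.
   Context: Fix a lattice $(\mathcal{L},\sqsubseteq,\sqcup)$ of labels. The calculus has types $\tau::=\mathbf{unit}\mid\tau_1\to\tau_2\mid\tau_1+\tau_2\mid\tau_1\times\tau_2\mid\mathcal{L}\mid\mathbf{Ref}\,s\,\tau$ with $s\in\{I,S\}$ (standard simple typing; terms are implicitly well-typed and the tag $s$ determines which reference rules apply), expressions $e::=x\mid\lambda x.e\mid e_1\,e_2\mid()\mid\ell\mid(e_1,e_2)\mid\mathbf{fst}(e)\mid\mathbf{snd}(e)\mid\mathbf{inl}(e)\mid\mathbf{inr}(e)\mid\mathbf{case}(e,x.e_1,x.e_2)\mid\mathbf{getLabel}\mid\mathbf{labelOf}(e)\mid e_1\sqsubseteq^{?}e_2\mid\mathbf{taint}(e_1,e_2)\mid\mathbf{new}(e)\mid\,!e\mid e_1:=e_2\mid\mathbf{labelOfRef}(e)$, raw values $r::=()\mid(x.e,\theta)\mid\mathbf{inl}(v)\mid\mathbf{inr}(v)\mid(v_1,v_2)\mid\ell\mid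 n_\ell\mid n$ ($n\in\mathbb N$; $n_\ell$ is a flow-insensitive reference to memory $\ell$, $n$ a flow-sensitive heap address), values $v::=r^{\ell}$, environments $\theta$ finite maps from variables to values; $v\sqcup\ell'$ denotes $r^{\ell\sqcup\ell'}$ for $v=r^\ell$. Memories are finite lists of raw values, a store $\Sigma$ maps each label to a memory, a heap $\mu$ is a finite list of values; for a list $X$, $|X|$ is its length, $X[n]$ its $n$-th entry (from $0$), $X[n\mapsto y]$ the list with entry $n$ replaced (appended if $n=|X|$). Evaluation $\langle\Sigma,\mu,e\rangle\Downarrow^\theta_{pc}\langle\Sigma',\mu',v\rangle$ is the least relation closed under the rules below; ''$e\Downarrow v$'' means evaluation with current $\theta,pc$, store and heap threaded through premises left to right, rules without premises leave them unchanged. (Var) $x\Downarrow\theta(x)\sqcup pc$. (Unit) $()\Downarrow()^{pc}$. (Label) $\ell\Downarrow\ell^{pc}$. (Fun) $\lambda x.e\Downarrow(x.e,\theta)^{pc}$. (GetLabel) $\mathbf{getLabel}\Downarrow pc^{pc}$. (App) if $e_1\Downarrow(x.e,\theta')^{\ell}$, $e_2\Downarrow v_2$, and $e$ evaluates to $v$ in $\theta'[x\mapsto v_2]$ with program counter $pc\sqcup\ell$, then $e_1\,e_2\Downarrow v$. (Inl/Inr) $\mathbf{inl}(e)\Downarrow\mathbf{inl}(v)^{pc}$ if $e\Downarrow v$, similarly $\mathbf{inr}$. (Case) if $e\Downarrow\mathbf{inl}(v_1)^\ell$ and $e_1$ evaluates to $v$ in $\theta[x\mapsto v_1]$ at $pc\sqcup\ell$,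 then $\mathbf{case}(e,x.e_1,x.e_2)\Downarrow v$; symmetrically for $\mathbf{inr}$. (Pair) $(e_1,e_2)\Downarrow(v_1,v_2)^{pc}$. (Fst/Snd) if $e\Downarrow(v_1,v_2)^\ell$ then $\mathbf{fst}(e)\Downarrow v_1\sqcup\ell$, $\mathbf{snd}(e)\Downarrow v_2\sqcup\ell$. (LabelOf) if $e\Downarrow r^\ell$ then $\mathbf{labelOf}(e)\Downarrow\ell^\ell$. (Compare) if $e_1\Downarrow\ell_1^{\ell_1'}$, $e_2\Downarrow\ell_2^{\ell_2'}$ then $e_1\sqsubseteq^?e_2\Downarrow\mathbf{inl}(()^{pc})^{\ell_1'\sqcup\ell_2'}$ if $\ell_1\sqsubseteq\ell_2$, else $\mathbf{inr}(()^{pc})^{\ell_1'\sqcup\ell_2'}$. (Taint) if $e_1\Downarrow\ell^{\ell'}$, $\ell'\sqsubseteq\ell$, and $e_2$ evaluates to $v$ with program counter $\ell$, then $\mathbf{taint}(e_1,e_2)\Downarrow v$. Flow-insensitive references ($\mathbf{Ref}\,I$): (New) if $e\Downarrow r^\ell$ with store $\Sigma'$, $n=|\Sigma'(\ell)|$, then $\mathbf{new}(e)\Downarrow(n_\ell)^{pc}$ with store $\Sigma'[\ell\mapsto\Sigma'(\ell)[n\mapsto r]]$; (Read) if $e\Downarrow(n_\ell)^{\ell'}$ with store $\Sigma'$, $\Sigma'(\ell)[n]=r$, then $!e\Downarrow r^{\ell\sqcup\ell'}$; (Write) if $e_1\Downarrow(n_\ell)^{\ell_1}$, $\ell_1\sqsubseteq\ell$,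 $e_2\Downarrow r^{\ell_2}$ with store $\Sigma''$, $\ell_2\sqsubseteq\ell$, then $e_1:=e_2\Downarrow()^{pc}$ with store $\Sigma''[\ell\mapsto\Sigma''(\ell)[n\mapsto r]]$; (LabelOfRef) if $e\Downarrow(n_\ell)^{\ell'}$ then $\mathbf{labelOfRef}(e)\Downarrow\ell^{\ell\sqcup\ell'}$. Flow-sensitive references ($\mathbf{Ref}\,S$): (New-FS) if $e\Downarrow v$ with heap $\mu'$ and $n=|\mu'|$, then $\mathbf{new}(e)\Downarrow n^{pc}$ with heap $\mu'[n\mapsto v]$; (Read-FS) if $e\Downarrow n^{\ell}$ with heap $\mu'$ and $\mu'[n]=r^{\ell'}$, then $!e\Downarrow r^{\ell\sqcup\ell'}$; (LabelOfRef-FS) if $e\Downarrow n^{\ell_1}$ with heap $\mu'$ and $\mu'[n]=r^{\ell_2}$ then $\mathbf{labelOfRef}(e)\Downarrow\ell_2^{\ell_1\sqcup\ell_2}$; (Write-FS) if $e_1\Downarrow n^{\ell}$, $e_2\Downarrow r_2^{\ell_2}$ with heap $\mu''$, $\mu''[n]=r_1^{\ell_1}$ and $\ell\sqsubseteq\ell_1$, then $e_1:=e_2\Downarrow()^{pc}$ with heap $\mu''[n\mapsto r_2^{\ell_2\sqcup\ell}]$. Initial configurations are $\langle\Sigma,\mu,e\rangle$, final ones $\langle\Sigma,\mu,v\rangle$, and $c\Downarrow^\theta_{pc}c'$ is the evaluation relation. A partial bijection $\beta$ is a finite injective partial function $\mathbb N\rightharpoonup\mathbb N$; $\beta\subseteq\beta'$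 means every pair of $\beta$ is in $\beta'$. $A$-equivalence up to $\beta$ ($\approx^\beta_A$), mutually on values and raw values: $r_1^\ell\approx^\beta_A r_2^\ell$ if $\ell\sqsubseteq A$ and $r_1\approx^\beta_A r_2$; $r_1^{\ell_1}\approx^\beta_A r_2^{\ell_2}$ if $\ell_1,\ell_2\not\sqsubseteq A$; $()\approx()$, $\ell\approx\ell$; closures $(x.e_1,\theta_1)\approx^\beta_A(x.e_2,\theta_2)$ if $e_1,e_2$ $\alpha$-equivalent and $\theta_1\approx^\beta_A\theta_2$ (same domain, pointwise); injections and pairs homomorphically; $n_\ell\approx^\beta_A n_\ell$ if $\ell\sqsubseteq A$; $(n_1)_{\ell_1}\approx^\beta_A(n_2)_{\ell_2}$ if $\ell_1,\ell_2\not\sqsubseteq A$; $n_1\approx^\beta_A n_2$ (heap addresses) iff $\beta(n_1)=n_2$. Memories at label $\ell$: always related if $\ell\not\sqsubseteq A$, otherwise same length and pointwise related; stores pointwise. Heaps: $\mu_1\approx^\beta_A\mu_2$ iff $\mathrm{dom}(\beta)\subseteq\{0,\dots,|\mu_1|-1\}$, $\mathrm{rng}(\beta)\subseteq\{0,\dots,|\mu_2|-1\}$ and $\mu_1[n_1]\approx^\beta_A\mu_2[n_2]$ whenever $\beta(n_1)=n_2$. Initial configurations $\langle\Sigma_1,\mu_1,e_1\rangle\approx^\beta_A\langle\Sigma_2,\mu_2,e_2\rangle$ iff $\Sigma_1\approx^\beta_A\Sigma_2$, $\mu_1\approx^\beta_A\mu_2$ and $e_1,e_2$ $\alpha$-equivalent;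 final configurations $\langle\Sigma_1,\mu_1,v_1\rangle\approx^\beta_A\langle\Sigma_2,\mu_2,v_2\rangle$ iff the stores, heaps and values are related up to $\beta$. Validity: $n\vdash\mathbf{Valid}(x)$ for a value, raw value, environment, memory, store or heap $x$ means every flow-sensitive heap address $n'$ occurring in $x$ (including inside closure environments and nested values) satisfies $n'<n$ (flow-insensitive references $n'_\ell$ are always valid). $\vdash\mathbf{Valid}(\langle\Sigma,\mu,e\rangle,\theta)$ iff, for $n=|\mu|$, $n\vdash\mathbf{Valid}(\Sigma)$, $n\vdash\mathbf{Valid}(\mu)$ and $n\vdash\mathbf{Valid}(\theta)$. *)

(* Defs.v *)
From HB Require Import structures.
From Stdlib Require Import List.
From mathcomp Require Import all_boot all_order.

Set Implicit Arguments.
Unset Strict Implicit.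
Unset Printing Implicit Defensive.

Section DFG.
Variables (disp : Order.disp_t) (L : latticeType disp).

Definition lle (l1 l2 : L) : bool := (l1 <= l2)%O.
Definition ljoin (l1 l2 : L) : L := Order.join l1 l2.

(* reference tag: I = flow-insensitive, S = flow-sensitive.  Terms are
   implicitly well-typed in the paper; the type Ref s tau of the reference
   argument determines which rules apply.  We record this tag s explicitly
   on the reference-manipulating constructs. *)
Inductive rtag := TagI | TagS.

(* Expressions, with de Bruijn indices for variables (so that alpha-equivalent
   terms are identified; EVar 0 is the innermost bound variable).
   ELam e binds 0 in e; ECase e e1 e2 binds 0 in e1 and in e2. *)
Inductive exp :=
| EVar (x : nat)
| ELam (e : exp)
| EApp (e1 e2 : exp)
| EUnit
| ELabel (l : L)
| EPair (e1 e2 : exp)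
| EFst (e : exp)
| ESnd (e : exp)
| EInl (e : exp)
| EInr (e : exp)
| ECase (e e1 e2 : exp)
| EGetLabel
| ELabelOf (e : exp)
| ECompare (e1 e2 : exp)
| ETaint (e1 e2 : exp)
| ENew (s : rtag) (e : exp)
| ERead (s : rtag) (e : exp)
| EWrite (s : rtag) (e1 e2 : exp)
| ELabelOfRef (s : rtag) (e : exp).

(* Raw values and labeled values r^l.  A closure (x.e, theta) is
   RClos e theta, where theta is an environment: index i of the list gives
   the value of de Bruijn variable i. *)
Inductive raw :=
| RUnit
| RClos (e : exp) (th : list value)
| RInl (v : value)
| RInr (v : value)
| RPair (v1 v2 : value)
| RLabel (l : L)
| RRefI (n : nat) (l : L)      (* n_l : flow-insensitive reference into memory l *)
| RAddr (n : nat)              (* n : flow-sensitive heap address *)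
with value :=
| Val (r : raw) (l : L).

Definition env := list value.
Definition memory := list raw.
Definition store := L -> memory.
Definition heap := list value.

Definition vjoin (v : value) (l' : L) : value :=
  match v with Val r l => Val r (ljoin l l') end.

(* X[n |-> y]: replace entry n, or append if n = |X|
   (only used with n <= |X|, which the rules ensure). *)
Definition lupd {T : Type} (d0 : T) (X : list T) (n : nat) (y : T) : list T :=
  set_nth d0 X n y.

Definition store_upd (St : store) (l : L) (m : memory) : store :=
  fun l' => if l' == l then m else St l'.

Inductive icfg := ICfg (St : store) (mu : heap) (e : exp).
Inductive fcfg := FCfg (St : store) (mu : heap) (v : value).

(* Big-step evaluation  <St,mu,e> ⇓^theta_pc <St',mu',v>  is  eval theta pc c c'. *)
Inductive eval : env -> L -> icfg -> fcfg -> Prop :=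
| ev_var th pc St mu x v :
    nth_error th x = Some v ->
    eval th pc (ICfg St mu (EVar x)) (FCfg St mu (vjoin v pc))
| ev_unit th pc St mu :
    eval th pc (ICfg St mu EUnit) (FCfg St mu (Val RUnit pc))
| ev_label th pc St mu l :
    eval th pc (ICfg St mu (ELabel l)) (FCfg St mu (Val (RLabel l) pc))
| ev_fun th pc St mu e :
    eval th pc (ICfg St mu (ELam e)) (FCfg St mu (Val (RClos e th) pc))
| ev_getlabel th pc St mu :
    eval th pc (ICfg St mu EGetLabel) (FCfg St mu (Val (RLabel pc) pc))
| ev_app th pc St mu e1 e2 S1 mu1 e th' l S2 mu2 v2 S3 mu3 v :
    eval th pc (ICfg St mu e1) (FCfg S1 mu1 (Val (RClos e th') l)) ->
    eval th pc (ICfg S1 mu1 e2) (FCfg S2 mu2 v2) ->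
    eval (v2 :: th') (ljoin pc l) (ICfg S2 mu2 e) (FCfg S3 mu3 v) ->
    eval th pc (ICfg St mu (EApp e1 e2)) (FCfg S3 mu3 v)
| ev_inl th pc St mu e S1 mu1 v :
    eval th pc (ICfg St mu e) (FCfg S1 mu1 v) ->
    eval th pc (ICfg St mu (EInl e)) (FCfg S1 mu1 (Val (RInl v) pc))
| ev_inr th pc St mu e S1 mu1 v :
    eval th pc (ICfg St mu e) (FCfg S1 mu1 v) ->
    eval th pc (ICfg St mu (EInr e)) (FCfg S1 mu1 (Val (RInr v) pc))
| ev_case_inl th pc St mu e e1 e2 S1 mu1 v1 l S2 mu2 v :
    eval th pc (ICfg St mu e) (FCfg S1 mu1 (Val (RInl v1) l)) ->
    eval (v1 :: th) (ljoin pc l) (ICfg S1 mu1 e1) (FCfg S2 mu2 v) ->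
    eval th pc (ICfg St mu (ECase e e1 e2)) (FCfg S2 mu2 v)
| ev_case_inr th pc St mu e e1 e2 S1 mu1 v1 l S2 mu2 v :
    eval th pc (ICfg St mu e) (FCfg S1 mu1 (Val (RInr v1) l)) ->
    eval (v1 :: th) (ljoin pc l) (ICfg S1 mu1 e2) (FCfg S2 mu2 v) ->
    eval th pc (ICfg St mu (ECase e e1 e2)) (FCfg S2 mu2 v)
| ev_pair th pc St mu e1 e2 S1 mu1 v1 S2 mu2 v2 :
    eval th pc (ICfg St mu e1) (FCfg S1 mu1 v1) ->
    eval th pc (ICfg S1 mu1 e2) (FCfg S2 mu2 v2) ->
    eval th pc (ICfg St mu (EPair e1 e2)) (FCfg S2 mu2 (Val (RPair v1 v2) pc))
| ev_fst th pc St mu e S1 mu1 v1 v2 l :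
    eval th pc (ICfg St mu e) (FCfg S1 mu1 (Val (RPair v1 v2) l)) ->
    eval th pc (ICfg St mu (EFst e)) (FCfg S1 mu1 (vjoin v1 l))
| ev_snd th pc St mu e S1 mu1 v1 v2 l :
    eval th pc (ICfg St mu e) (FCfg S1 mu1 (Val (RPair v1 v2) l)) ->
    eval th pc (ICfg St mu (ESnd e)) (FCfg S1 mu1 (vjoin v2 l))
| ev_labelof th pc St mu e S1 mu1 r l :
    eval th pc (ICfg St mu e) (FCfg S1 mu1 (Val r l)) ->
    eval th pc (ICfg St mu (ELabelOf e)) (FCfg S1 mu1 (Val (RLabel l) l))
| ev_compare th pc St mu e1 e2 S1 mu1 l1 l1' S2 mu2 l2 l2' :
    eval th pc (ICfg St mu e1) (FCfg S1 mu1 (Val (RLabel l1) l1')) ->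
    eval th pc (ICfg S1 mu1 e2) (FCfg S2 mu2 (Val (RLabel l2) l2')) ->
    eval th pc (ICfg St mu (ECompare e1 e2))
      (FCfg S2 mu2 (Val (if lle l1 l2 then RInl (Val RUnit pc)
                         else RInr (Val RUnit pc)) (ljoin l1' l2')))
| ev_taint th pc St mu e1 e2 S1 mu1 l l' S2 mu2 v :
    eval th pc (ICfg St mu e1) (FCfg S1 mu1 (Val (RLabel l) l')) ->
    lle l' l ->
    eval th l (ICfg S1 mu1 e2) (FCfg S2 mu2 v) ->
    eval th pc (ICfg St mu (ETaint e1 e2)) (FCfg S2 mu2 v)
| ev_new th pc St mu e S1 mu1 r l :
    eval th pc (ICfg St mu e) (FCfg S1 mu1 (Val r l)) ->
    eval th pc (ICfg St mu (ENew TagI e))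
      (FCfg (store_upd S1 l (lupd RUnit (S1 l) (size (S1 l)) r)) mu1
            (Val (RRefI (size (S1 l)) l) pc))
| ev_read th pc St mu e S1 mu1 n l l' r :
    eval th pc (ICfg St mu e) (FCfg S1 mu1 (Val (RRefI n l) l')) ->
    nth_error (S1 l) n = Some r ->
    eval th pc (ICfg St mu (ERead TagI e)) (FCfg S1 mu1 (Val r (ljoin l l')))
| ev_write th pc St mu e1 e2 S1 mu1 n l l1 S2 mu2 r l2 :
    eval th pc (ICfg St mu e1) (FCfg S1 mu1 (Val (RRefI n l) l1)) ->
    lle l1 l ->
    eval th pc (ICfg S1 mu1 e2) (FCfg S2 mu2 (Val r l2)) ->
    lle l2 l ->
    n <= size (S2 l) ->
    eval th pc (ICfg St mu (EWrite TagI e1 e2))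
      (FCfg (store_upd S2 l (lupd RUnit (S2 l) n r)) mu2 (Val RUnit pc))
| ev_labelofref th pc St mu e S1 mu1 n l l' :
    eval th pc (ICfg St mu e) (FCfg S1 mu1 (Val (RRefI n l) l')) ->
    eval th pc (ICfg St mu (ELabelOfRef TagI e))
      (FCfg S1 mu1 (Val (RLabel l) (ljoin l l')))
| ev_new_fs th pc St mu e S1 mu1 v :
    eval th pc (ICfg St mu e) (FCfg S1 mu1 v) ->
    eval th pc (ICfg St mu (ENew TagS e))
      (FCfg S1 (lupd v mu1 (size mu1) v) (Val (RAddr (size mu1)) pc))
| ev_read_fs th pc St mu e S1 mu1 n l r l' :
    eval th pc (ICfg St mu e) (FCfg S1 mu1 (Val (RAddr n) l)) ->
    nth_error mu1 n = Some (Val r l') ->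
    eval th pc (ICfg St mu (ERead TagS e)) (FCfg S1 mu1 (Val r (ljoin l l')))
| ev_labelofref_fs th pc St mu e S1 mu1 n l1 r l2 :
    eval th pc (ICfg St mu e) (FCfg S1 mu1 (Val (RAddr n) l1)) ->
    nth_error mu1 n = Some (Val r l2) ->
    eval th pc (ICfg St mu (ELabelOfRef TagS e))
      (FCfg S1 mu1 (Val (RLabel l2) (ljoin l1 l2)))
| ev_write_fs th pc St mu e1 e2 S1 mu1 n l S2 mu2 r2 l2 r1 l1 :
    eval th pc (ICfg St mu e1) (FCfg S1 mu1 (Val (RAddr n) l)) ->
    eval th pc (ICfg S1 mu1 e2) (FCfg S2 mu2 (Val r2 l2)) ->
    nth_error mu2 n = Some (Val r1 l1) ->
    lle l l1 ->
    eval th pc (ICfg St mu (EWrite TagS e1 e2))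
      (FCfg S2 (lupd (Val r2 l2) mu2 n (Val r2 (ljoin l2 l))) (Val RUnit pc)).

Definition pbij (b : nat -> option nat) : Prop :=
  (forall n1 n2 m, b n1 = Some m -> b n2 = Some m -> n1 = n2) /\
  (exists N, forall n, N <= n -> b n = None).

Definition bsub (b b' : nat -> option nat) : Prop :=
  forall n m, b n = Some m -> b' n = Some m.

Inductive veq (A : L) (b : nat -> option nat) : value -> value -> Prop :=
| veq_low r1 r2 l : lle l A -> req A b r1 r2 -> veq A b (Val r1 l) (Val r2 l)
| veq_high r1 r2 l1 l2 : ~~ lle l1 A -> ~~ lle l2 A -> veq A b (Val r1 l1) (Val r2 l2)
with req (A : L) (b : nat -> option nat) : raw -> raw -> Prop :=
| req_unit : req A b RUnit RUnit
| req_label l : req A b (RLabel l) (RLabel l)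
| req_clos e th1 th2 : eeq A b th1 th2 -> req A b (RClos e th1) (RClos e th2)
| req_inl v1 v2 : veq A b v1 v2 -> req A b (RInl v1) (RInl v2)
| req_inr v1 v2 : veq A b v1 v2 -> req A b (RInr v1) (RInr v2)
| req_pair v1 v2 w1 w2 : veq A b v1 w1 -> veq A b v2 w2 ->
    req A b (RPair v1 v2) (RPair w1 w2)
| req_refI_low n l : lle l A -> req A b (RRefI n l) (RRefI n l)
| req_refI_high n1 l1 n2 l2 : ~~ lle l1 A -> ~~ lle l2 A ->
    req A b (RRefI n1 l1) (RRefI n2 l2)
| req_addr n1 n2 : b n1 = Some n2 -> req A b (RAddr n1) (RAddr n2)
with eeq (A : L) (b : nat -> option nat) : env -> env -> Prop :=
| eeq_nil : eeq A b nil nil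
| eeq_cons v1 v2 th1 th2 : veq A b v1 v2 -> eeq A b th1 th2 ->
    eeq A b (v1 :: th1) (v2 :: th2).

Definition mem_eq (A : L) (b : nat -> option nat) (l : L) (m1 m2 : memory) : Prop :=
  lle l A ->
  size m1 = size m2 /\
  (forall i r1 r2, nth_error m1 i = Some r1 -> nth_error m2 i = Some r2 ->
     req A b r1 r2).

Definition store_eq (A : L) (b : nat -> option nat) (S1 S2 : store) : Prop :=
  forall l, mem_eq A b l (S1 l) (S2 l).

(* dom(b) ⊆ {0..|mu1|-1}, rng(b) ⊆ {0..|mu2|-1}, and related entries *)
Definition heap_eq (A : L) (b : nat -> option nat) (mu1 mu2 : heap) : Prop :=
  forall n1 n2, b n1 = Some n2 ->
    exists v1 v2, nth_error mu1 n1 = Some v1 /\ nth_error mu2 n2 = Some v2 /\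
                  veq A b v1 v2.

(* alpha-equivalence is syntactic equality in the de Bruijn representation *)
Definition icfg_eq (A : L) (b : nat -> option nat) (c1 c2 : icfg) : Prop :=
  match c1, c2 with
  | ICfg S1 mu1 e1, ICfg S2 mu2 e2 =>
      store_eq A b S1 S2 /\ heap_eq A b mu1 mu2 /\ e1 = e2
  end.

Definition fcfg_eq (A : L) (b : nat -> option nat) (c1 c2 : fcfg) : Prop :=
  match c1, c2 with
  | FCfg S1 mu1 v1, FCfg S2 mu2 v2 =>
      store_eq A b S1 S2 /\ heap_eq A b mu1 mu2 /\ veq A b v1 v2
  end.

Inductive vvalid (N : nat) : value -> Prop :=
| vvalid_val r l : rvalid N r -> vvalid N (Val r l)
with rvalid (N : nat) : raw -> Prop :=
| rvalid_unit : rvalid N RUnit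
| rvalid_clos e th : evalid N th -> rvalid N (RClos e th)
| rvalid_inl v : vvalid N v -> rvalid N (RInl v)
| rvalid_inr v : vvalid N v -> rvalid N (RInr v)
| rvalid_pair v1 v2 : vvalid N v1 -> vvalid N v2 -> rvalid N (RPair v1 v2)
| rvalid_label l : rvalid N (RLabel l)
| rvalid_refI n l : rvalid N (RRefI n l)
| rvalid_addr n : n < N -> rvalid N (RAddr n)
with evalid (N : nat) : env -> Prop :=
| evalid_nil : evalid N nil
| evalid_cons v th : vvalid N v -> evalid N th -> evalid N (v :: th).

Definition store_valid (N : nat) (St : store) : Prop :=
  forall l, List.Forall (rvalid N) (St l).

Definition heap_valid (N : nat) (mu : heap) : Prop :=
  List.Forall (vvalid N) mu.

Definition cfg_valid (c : icfg) (th : env) : Prop :=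
  match c with
  | ICfg St mu e =>
      store_valid (size mu) St /\ heap_valid (size mu) mu /\ evalid (size mu) th
  end.

End DFG.

(* Main.v *)
Require Import Defs.
From mathcomp Require Import all_boot all_order.
From Stdlib Require Import List.
Import Order.LTheory.

Set Implicit Arguments.
Unset Strict Implicit.

Section NI.
Variables (disp : Order.disp_t) (L : latticeType disp) (A : L).

Lemma lle_trans (x y z : L) : lle x y -> lle y z -> lle x z.
Proof. exact: le_trans. Qed.
Lemma lle_joinl (x y : L) : lle x (ljoin x y).
Proof. exact: leUl. Qed.
Lemma lle_joinr (x y : L) : lle y (ljoin x y).
Proof. exact: leUr. Qed.
Lemma lle_join (x y z : L) : lle (ljoin x y) z = lle x z && lle y z.
Proof. exact: leUx. Qed.
Lemma high_mono (x y : L) : ~~ lle x A -> lle x y -> ~~ lle y A.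
Proof. move=> hx hxy; apply/negP => hy; move/negP: hx; apply; exact: lle_trans hxy hy. Qed.
Lemma high_joinl (x y : L) : ~~ lle x A -> ~~ lle (ljoin x y) A.
Proof. move=> h; exact: high_mono h (lle_joinl _ _). Qed.
Lemma high_joinr (x y : L) : ~~ lle y A -> ~~ lle (ljoin x y) A.
Proof. move=> h; exact: high_mono h (lle_joinr _ _). Qed.

Scheme veq_ind' := Induction for veq Sort Prop
with req_ind' := Induction for req Sort Prop
with eeq_ind' := Induction for eeq Sort Prop.

Lemma eq_mono (b b' : nat -> option nat) : bsub b b' ->
  (forall v w, veq A b v w -> veq A b' v w) /\
  (forall r s, req A b r s -> req A b' r s) /\
  (forall t u, eeq A b t u -> eeq A b' t u).
Proof.
move=> hb; split; [|split].
- apply: (veq_ind' (P:=fun v w _ => veq A b' v w) (P0:=fun v w _ => req A b' v w)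
     (P1:=fun v w _ => eeq A b' v w)); intros; econstructor; eauto.
- apply: (req_ind' (P:=fun v w _ => veq A b' v w) (P0:=fun v w _ => req A b' v w)
     (P1:=fun v w _ => eeq A b' v w)); intros; econstructor; eauto.
- apply: (eeq_ind' (P:=fun v w _ => veq A b' v w) (P0:=fun v w _ => req A b' v w)
     (P1:=fun v w _ => eeq A b' v w)); intros; econstructor; eauto.
Qed.
Lemma veq_mono b b' v w : bsub b b' -> veq A b v w -> veq A b' v w.
Proof. by move=> h; case: (eq_mono h) => H _; apply: H. Qed.
Lemma req_mono b b' v w : bsub b b' -> req A b v w -> req A b' v w.
Proof. by move=> h; case: (eq_mono h) => _ [H _]; apply: H. Qed.
Lemma eeq_mono b b' v w : bsub b b' -> eeq A b v w -> eeq A b' v w.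
Proof. by move=> h; case: (eq_mono h) => _ [_ H]; apply: H. Qed.
Lemma store_eq_mono b b' S1 S2 : bsub b b' -> store_eq A b S1 S2 -> store_eq A b' S1 S2.
Proof.
move=> h hs l hl; case: (hs l hl) => h1 h2; split => // i r1 r2 e1 e2.
exact: req_mono h (h2 _ _ _ e1 e2).
Qed.

Lemma bsub_refl b : bsub b b. Proof. by []. Qed.
Lemma bsub_trans b1 b2 b3 : bsub b1 b2 -> bsub b2 b3 -> bsub b1 b3.
Proof. by move=> h1 h2 n m /h1 /h2. Qed.

Lemma eeq_nth b t u x v : eeq A b t u -> nth_error t x = Some v ->
  exists w, nth_error u x = Some w /\ veq A b v w.
Proof.
move=> h; elim: h x => [|v1 v2 t1 t2 hv ht IH] [|x] //=.
- by move=> [<-]; exists v2.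
- exact: IH.
Qed.

Definition vlab (v : value L) := match v with Val _ l => l end.

Lemma veq_same b r1 r2 l : req A b r1 r2 -> veq A b (Val r1 l) (Val r2 l).
Proof. move=> h; case hl: (lle l A); [exact: veq_low | apply: veq_high; by rewrite hl]. Qed.

Lemma veq_high' b v w : ~~ lle (vlab v) A -> ~~ lle (vlab w) A -> veq A b v w.
Proof. by case: v; case: w => /= *; apply: veq_high. Qed.

Lemma veq_lab b v w : veq A b v w -> lle (vlab v) A = lle (vlab w) A.
Proof. by case=> [r1 r2 l _ _|r1 r2 l1 l2 /negbTE -> /negbTE ->]. Qed.

Lemma veq_vjoin b v w l : veq A b v w -> veq A b (vjoin v l) (vjoin w l).
Proof.
case=> [r1 r2 l' hl hr|r1 r2 l1 l2 h1 h2] /=.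
- exact: veq_same.
- by apply: veq_high; apply: high_joinl.
Qed.

Lemma veq_vjoin_high b v w l l' : ~~ lle l A -> ~~ lle l' A -> veq A b (vjoin v l) (vjoin w l').
Proof. case: v => r1 l1; case: w => r2 l2 h h' /=; apply: veq_high; exact: high_joinr. Qed.


Lemma nth_error_set_nth (T : Type) (d : T) s n y i : n <= size s ->
  nth_error (set_nth d s n y) i = if i == n then Some y else nth_error s i.
Proof.
elim: s n i => [|x s IH] [|n] [|i] //=; try by case: i.
by move=> h; rewrite IH.
Qed.

Lemma nth_error_size (T : Type) (s : list T) n v : nth_error s n = Some v -> n < size s.
Proof. elim: s n => [|x s IH] [|n] //= /IH //. Qed.

Lemma nth_error_none (T : Type) (s : list T) n : size s <= n -> nth_error s n = None.
Proof. elim: s n => [|x s IH] [|n] //= /IH //. Qed.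

Definition hconf (mu mu' : heap L) := forall n v, nth_error mu n = Some v ->
  exists v', nth_error mu' n = Some v' /\ (lle (vlab v) A -> v' = v) /\
     (~~ lle (vlab v) A -> ~~ lle (vlab v') A).
Definition sconf (S S' : store L) := forall l, lle l A -> S' l = S l.

Lemma hconf_refl mu : hconf mu mu.
Proof. by move=> n v h; exists v. Qed.
Lemma hconf_trans m1 m2 m3 : hconf m1 m2 -> hconf m2 m3 -> hconf m1 m3.
Proof.
move=> h1 h2 n v /h1 [v' [e' [hl hh]]]; case: (h2 _ _ e') => v'' [e'' [hl' hh']].
exists v''; split=> //; split.
- by move=> hv; rewrite -(hl hv) hl' // (hl hv).
- by move=> hv; apply: hh'; apply: hh.
Qed.
Lemma sconf_refl S : sconf S S. Proof. by []. Qed.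
Lemma sconf_trans S1 S2 S3 : sconf S1 S2 -> sconf S2 S3 -> sconf S1 S3.
Proof. by move=> h1 h2 l hl; rewrite h2 // h1. Qed.

Lemma hconf_app mu d v : hconf mu (lupd d mu (size mu) v).
Proof.
move=> n w h; exists w; split; last by split=> [_|]; [reflexivity|apply].
rewrite /lupd nth_error_set_nth; last exact: leqnn.
have hs := nth_error_size h.
case: eqP => [e|_]; last exact: h.
by subst n; rewrite ltnn in hs.
Qed.

Lemma hconf_upd_high mu d n v v' : nth_error mu n = Some v -> ~~ lle (vlab v) A ->
  ~~ lle (vlab v') A -> hconf mu (lupd d mu n v').
Proof.
move=> hn hv hv' m w hm; have hs := nth_error_size hn.
rewrite /lupd nth_error_set_nth; last exact: ltnW.
case: eqP => [em|_]; last by exists w; split; [exact: hm|split=> [_|]; [reflexivity|apply]].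
subst m; rewrite hn in hm; case: hm => <-; exists v'; split; first reflexivity.
split; last by move=> _; exact: hv'.
by move=> hl; move/negP: hv.
Qed.

Lemma sconf_upd_high S l m : ~~ lle l A -> sconf S (store_upd S l m).
Proof.
move=> hl l' hl'; rewrite /store_upd; case: eqP => // e; subst l'.
by move/negP: hl.
Qed.

Lemma heap_eq_conf b mu1 mu2 mu1' mu2' : heap_eq A b mu1 mu2 -> hconf mu1 mu1' ->
  hconf mu2 mu2' -> heap_eq A b mu1' mu2'.
Proof.
move=> h h1 h2 n1 n2 hb; case: (h _ _ hb) => v1 [v2 [e1 [e2 hv]]].
case: (h1 _ _ e1) => v1' [e1' [hl1 hh1]]; case: (h2 _ _ e2) => v2' [e2' [hl2 hh2]].
exists v1', v2'; split=> //; split=> //.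
case: hv hl1 hh1 hl2 hh2 => [r1 r2 l hl hr|r1 r2 l1 l2 hl1 hl2] /= a1 b1 a2 b2.
- by rewrite a1 // a2 //; apply: veq_low.
- by apply: veq_high'; [apply: b1|apply: b2].
Qed.

Lemma store_eq_conf b S1 S2 S1' S2' : store_eq A b S1 S2 -> sconf S1 S1' -> sconf S2 S2' ->
  store_eq A b S1' S2'.
Proof. by move=> h h1 h2 l hl; rewrite h1 // h2 //; apply: h. Qed.

Lemma heap_eq_upd b mu1 mu2 n1 n2 d1 d2 v w : pbij b -> heap_eq A b mu1 mu2 ->
  b n1 = Some n2 -> veq A b v w -> heap_eq A b (lupd d1 mu1 n1 v) (lupd d2 mu2 n2 w).
Proof.
move=> [inj _] h hb hv; case: (h _ _ hb) => x1 [x2 [e1 [e2 _]]].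
have s1 := nth_error_size e1; have s2 := nth_error_size e2.
move=> m1 m2 hm; rewrite /lupd nth_error_set_nth; last exact: ltnW.
rewrite nth_error_set_nth; last exact: ltnW.
case: (h _ _ hm) => y1 [y2 [f1 [f2 hy]]].
case: eqP => [em|nm].
- subst m1; rewrite hb in hm; case: hm => <-; rewrite eqxx; by exists v, w.
- case: eqP => [em2|_]; last by exists y1, y2.
  subst m2; by case: nm; apply: (inj _ _ _ hm hb).
Qed.

Definition bext (b : nat -> option nat) n1 n2 := fun n => if n == n1 then Some n2 else b n.

Lemma heap_eq_alloc b mu1 mu2 d1 d2 v w : pbij b -> heap_eq A b mu1 mu2 ->
  veq A b v w ->
  let b' := bext b (size mu1) (size mu2) in
  [/\ pbij b', bsub b b', b' (size mu1) = Some (size mu2) &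
   heap_eq A b' (lupd d1 mu1 (size mu1) v) (lupd d2 mu2 (size mu2) w)].
Proof.
move=> [inj [N hN]] h hv b'.
have dom n m : b n = Some m -> n < size mu1 /\ m < size mu2.
  by move=> /h [x1 [x2 [e1 [e2 _]]]]; split; apply: nth_error_size; eassumption.
have hsub : bsub b b'.
  move=> n m hb; rewrite /b' /bext; case: eqP => // en; subst n.
  by have [] := dom _ _ hb; rewrite ltnn.
split=> //.
- split.
  + move=> n1 n2 m; rewrite /b' /bext; case: eqP => [->|_]; case: eqP => [->|_] //.
    * by move=> [<-] /dom []; rewrite ltnn.
    * by move=> hb [e]; subst m; have [] := dom _ _ hb; rewrite ltnn.
    * exact: inj.
  + exists (maxn N (size mu1).+1) => n; rewrite geq_max => /andP [h1 h2].
    rewrite /b' /bext; case: eqP => [e|_]; first by subst n; rewrite ltnn in h2.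
    exact: hN.
- by rewrite /b' /bext eqxx.
- move=> m1 m2; rewrite /lupd !nth_error_set_nth //.
  rewrite /b' /bext; case: eqP => [_ [<-]|_ hb].
  + rewrite eqxx; exists v, w; split=> //; split=> //; exact: veq_mono hsub hv.
  + have [s1 s2] := dom _ _ hb.
    case: (h _ _ hb) => y1 [y2 [f1 [f2 hy]]].
    rewrite (ltn_eqF s2); exists y1, y2; split=> //; split=> //.
    exact: veq_mono hsub hy.
Qed.

Lemma store_eq_upd_low b S1 S2 l n d r1 r2 : store_eq A b S1 S2 -> lle l A ->
  n <= size (S1 l) -> req A b r1 r2 ->
  store_eq A b (store_upd S1 l (lupd d (S1 l) n r1)) (store_upd S2 l (lupd d (S2 l) n r2)).
Proof.
move=> h hl hn hr l' hl'; rewrite /store_upd; case: eqP => [e|_]; last exact: h.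
subst l'; case: (h l hl) => hs hm; split.
- by rewrite /lupd !size_set_nth hs.
- move=> i x1 x2; rewrite /lupd !nth_error_set_nth -?hs //.
  case: eqP => _; [by move=> [<-] [<-]|exact: hm].
Qed.


Definition fcv (c : fcfg L) := match c with FCfg _ _ v => v end.
Definition fcS (c : fcfg L) := match c with FCfg St _ _ => St end.
Definition fcmu (c : fcfg L) := match c with FCfg _ mu _ => mu end.
Definition icS (c : icfg L) := match c with ICfg St _ _ => St end.
Definition icmu (c : icfg L) := match c with ICfg _ mu _ => mu end.

Lemma lle_refl (x : L) : lle x x. Proof. exact: lexx. Qed.

Lemma eval_ge th pc c c' : eval th pc c c' -> lle pc (vlab (fcv c')).
Proof.
induction 1; simpl in *;
  try (solve [apply: lle_refl | eauto using lle_trans, lle_joinl, lle_joinr]).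
- case: v {H} => r l /=; exact: lle_joinr.
- case: v1 H IHeval => r l0 /= _ ?; eauto using lle_trans, lle_joinl, lle_joinr.
- case: v2 H IHeval => r l0 /= _ ?; eauto using lle_trans, lle_joinl, lle_joinr.
Qed.

Lemma eval_ge' (th : env L) (pc : L) S mu e S' mu' r l : eval th pc (ICfg S mu e) (FCfg S' mu' (Val r l)) ->
  lle pc l.
Proof. by move/eval_ge. Qed.

Lemma confine th pc c c' : eval th pc c c' -> ~~ lle pc A ->
  sconf (icS c) (fcS c') /\ hconf (icmu c) (fcmu c').
Proof.
induction 1; simpl in *; move=> hpc;
  try (solve [split; [apply: sconf_refl | apply: hconf_refl]]).
- case: (IHeval1 hpc) => a1 b1; case: (IHeval2 hpc) => a2 b2.
  case: (IHeval3 (high_joinl _ hpc)) => a3 b3.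
  split; eauto using sconf_trans, hconf_trans.
- exact: IHeval.
- exact: IHeval.
- case: (IHeval1 hpc) => a1 b1; case: (IHeval2 (high_joinl _ hpc)) => a2 b2.
  split; eauto using sconf_trans, hconf_trans.
- case: (IHeval1 hpc) => a1 b1; case: (IHeval2 (high_joinl _ hpc)) => a2 b2.
  split; eauto using sconf_trans, hconf_trans.
- case: (IHeval1 hpc) => a1 b1; case: (IHeval2 hpc) => a2 b2.
  split; eauto using sconf_trans, hconf_trans.
- exact: IHeval.
- exact: IHeval.
- exact: IHeval.
- case: (IHeval1 hpc) => a1 b1; case: (IHeval2 hpc) => a2 b2.
  split; eauto using sconf_trans, hconf_trans.
- have hl : ~~ lle l A.
    apply: high_mono hpc _; apply: lle_trans H0; exact: eval_ge' H.
  case: (IHeval1 hpc) => a1 b1; case: (IHeval2 hl) => a2 b2.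
  split; eauto using sconf_trans, hconf_trans.
- have hl : ~~ lle l A by apply: high_mono hpc _; exact: eval_ge' H.
  case: (IHeval hpc) => a1 b1; split=> //.
  apply: sconf_trans a1 _; exact: sconf_upd_high.
- exact: IHeval.
- have hl : ~~ lle l A.
    apply: high_mono hpc _; apply: lle_trans H0; exact: eval_ge' H.
  case: (IHeval1 hpc) => a1 b1; case: (IHeval2 hpc) => a2 b2.
  split; last by apply: hconf_trans b1 b2.
  apply: sconf_trans (sconf_trans a1 a2) _; exact: sconf_upd_high.
- exact: IHeval.
- case: (IHeval hpc) => a1 b1; split=> //.
  apply: hconf_trans b1 _; exact: hconf_app.
- exact: IHeval.
- exact: IHeval.
- have hl : ~~ lle l A by apply: high_mono hpc _; exact: eval_ge' H.
  case: (IHeval1 hpc) => a1 b1; case: (IHeval2 hpc) => a2 b2.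
  split; first by apply: sconf_trans a1 a2.
  apply: hconf_trans (hconf_trans b1 b2) _.
  apply: hconf_upd_high; first exact: H1.
  + exact: high_mono hl H2.
  + exact: high_joinr.
Qed.


Lemma high_both b th1 th2 pc1 pc2 S1 mu1 e1 S2 mu2 e2 c1' c2' :
  eval th1 pc1 (ICfg S1 mu1 e1) c1' -> eval th2 pc2 (ICfg S2 mu2 e2) c2' ->
  ~~ lle pc1 A -> ~~ lle pc2 A -> store_eq A b S1 S2 -> heap_eq A b mu1 mu2 ->
  fcfg_eq A b c1' c2'.
Proof.
move=> h1 h2 hp1 hp2 hS hH.
have [a1 b1] := confine h1 hp1; have [a2 b2] := confine h2 hp2.
have g1 := eval_ge h1; have g2 := eval_ge h2.
case: c1' h1 a1 b1 g1 => S1' mu1' v1 h1 a1 b1 g1.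
case: c2' h2 a2 b2 g2 => S2' mu2' v2 h2 a2 b2 g2 /=.
split; first exact: store_eq_conf hS a1 a2.
split; first exact: heap_eq_conf hH b1 b2.
apply: veq_high'; [exact: high_mono hp1 g1|exact: high_mono hp2 g2].
Qed.

End NI.

Section NI2.
Variables (disp : Order.disp_t) (L : latticeType disp) (A : L).

Lemma veq_low_inv b (r1 r2 : raw L) l l' : veq A b (Val r1 l) (Val r2 l') -> lle l A ->
  l' = l /\ req A b r1 r2.
Proof. by move=> h hl; inversion h; subst => //; move/negP: H2. Qed.

Lemma veq_high_inv b (r1 r2 : raw L) l l' : veq A b (Val r1 l) (Val r2 l') -> ~~ lle l A ->
  ~~ lle l' A.
Proof. by move=> h hl; inversion h; subst => //; move/negP: hl. Qed.

Lemma veq_joinl b (r1 r2 : raw L) l1 l2 l : veq A b (Val r1 l1) (Val r2 l2) ->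
  veq A b (Val r1 (ljoin l l1)) (Val r2 (ljoin l l2)).
Proof.
move=> h; case hl1: (lle l1 A).
- have [-> hr] := veq_low_inv h hl1; exact: veq_same.
- have h2 := veq_high_inv h (negbT hl1).
  apply: veq_high; apply: high_joinr => //; exact: negbT.
Qed.

Lemma req_clos_inv b e e' (th th' : env L) : req A b (RClos e th) (RClos e' th') ->
  e' = e /\ eeq A b th th'.
Proof. by move=> h; inversion h; subst. Qed.
Lemma req_inl_inv b (v w : value L) : req A b (RInl v) (RInl w) -> veq A b v w.
Proof. by move=> h; inversion h; subst. Qed.
Lemma req_inr_inv b (v w : value L) : req A b (RInr v) (RInr w) -> veq A b v w.
Proof. by move=> h; inversion h; subst. Qed.
Lemma req_inl_inr b (v w : value L) : req A b (RInl v) (RInr w) -> False.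
Proof. by move=> h; inversion h. Qed.
Lemma req_inr_inl b (v w : value L) : req A b (RInr v) (RInl w) -> False.
Proof. by move=> h; inversion h. Qed.
Lemma req_pair_inv b (v1 v2 w1 w2 : value L) : req A b (RPair v1 v2) (RPair w1 w2) ->
  veq A b v1 w1 /\ veq A b v2 w2.
Proof. by move=> h; inversion h; subst. Qed.
Lemma req_label_inv b (l l' : L) : req A b (RLabel l) (RLabel l') -> l' = l.
Proof. by move=> h; inversion h; subst. Qed.
Lemma req_refI_inv b n n' (l l' : L) : req A b (RRefI n l) (RRefI n' l') ->
  (n' = n /\ l' = l /\ lle l A) \/ (~~ lle l A /\ ~~ lle l' A).
Proof. by move=> h; inversion h; subst; [left|right]. Qed.
Lemma req_addr_inv b n n' : req A b (RAddr L n) (RAddr L n') -> b n = Some n'.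
Proof. by move=> h; inversion h; subst. Qed.

Lemma NI (th1 : env L) pc c1 c1' : eval th1 pc c1 c1' -> lle pc A ->
  forall th2 c2 c2' b, pbij b -> icfg_eq A b c1 c2 -> eeq A b th1 th2 ->
  eval th2 pc c2 c2' -> exists b', pbij b' /\ bsub b b' /\ fcfg_eq A b' c1' c2'.
Proof.
Ltac ih IH hp hb hS hH he b1 hb1 hs1 hS1 hH1 hv1 :=
  lazymatch type of hS with store_eq _ _ _ ?S2 =>
  lazymatch type of hH with heap_eq _ _ _ ?m2 =>
  match goal with Hev : eval ?t _ (ICfg S2 m2 ?E) ?c' |- _ =>
    edestruct (IH hp t (ICfg S2 m2 E) c' _ hb (conj hS (conj hH erefl)) he Hev)
      as [b1 [hb1 [hs1 [hS1 [hH1 hv1]]]]]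
  end end end.
Ltac fin b hb := exists b; split; [exact hb|split; [try exact: bsub_refl|rewrite /fcfg_eq; split; [|split]]].
induction 1 => hpc th2 c2 c2' b hb hc he h2; case: c2 hc h2 => SS2 MU2 E2 [hS [hH <-]] h2;
  inversion h2; subst; clear h2.
-
  have [w [hw hv]] := eeq_nth he H. rewrite hw in H6; case: H6 => <-.
  fin b hb; try done; exact: veq_vjoin.
- fin b hb; try done; exact: veq_same (req_unit _ _).
- fin b hb; try done; exact: veq_same (req_label _ _ _).
- fin b hb; try done; exact: veq_same (req_clos _ he).
- fin b hb; try done; exact: veq_same (req_label _ _ _).
-
  ih IHeval1 hpc hb hS hH he b1 hb1 hs1 hS1 hH1 hv1.
  ih IHeval2 hpc hb1 hS1 hH1 (eeq_mono hs1 he) b2 hb2 hs2 hS2 hH2 hv2.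
  case hl: (lle l A).
  + have [e0 hr] := veq_low_inv hv1 hl; subst l0.
    have [e0' hth] := req_clos_inv hr; subst e4.
    have hpl : lle (ljoin pc l) A by rewrite lle_join hpc hl.
    ih IHeval3 hpl hb2 hS2 hH2 (eeq_cons hv2 (eeq_mono hs2 hth)) b3 hb3 hs3 hS3 hH3 hv3.
    exists b3; split=> //; split; first exact: bsub_trans hs1 (bsub_trans hs2 hs3).
    by split=> //.
  + have hl0 := veq_high_inv hv1 (negbT hl).
    exists b2; split=> //; split; first exact: bsub_trans hs1 hs2.
    apply: high_both H1 H11 _ _ hS2 hH2; apply: high_joinr => //; exact: negbT.
-
  ih IHeval hpc hb hS hH he b1 hb1 hs1 hS1 hH1 hv1.
  fin b1 hb1; try done; exact: veq_same (req_inl hv1).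
- ih IHeval hpc hb hS hH he b1 hb1 hs1 hS1 hH1 hv1.
  fin b1 hb1; try done; exact: veq_same (req_inr hv1).
-
  ih IHeval1 hpc hb hS hH he b1 hb1 hs1 hS1 hH1 hv1.
  case hl: (lle l A).
  + have [e0 hr] := veq_low_inv hv1 hl; subst l0.
    have hv := req_inl_inv hr.
    have hpl : lle (ljoin pc l) A by rewrite lle_join hpc hl.
    ih IHeval2 hpl hb1 hS1 hH1 (eeq_cons hv (eeq_mono hs1 he)) b2 hb2 hs2 hS2 hH2 hv2.
    exists b2; split=> //; split; first exact: bsub_trans hs1 hs2.
    by split=> //.
  + have hl0 := veq_high_inv hv1 (negbT hl).
    exists b1; split=> //; split=> //.
    apply: high_both H0 H10 _ _ hS1 hH1; apply: high_joinr => //; exact: negbT.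
- ih IHeval1 hpc hb hS hH he b1 hb1 hs1 hS1 hH1 hv1.
  case hl: (lle l A).
  + have [e0 hr] := veq_low_inv hv1 hl; subst l0.
    by case: (req_inl_inr hr).
  + have hl0 := veq_high_inv hv1 (negbT hl).
    exists b1; split=> //; split=> //.
    apply: high_both H0 H10 _ _ hS1 hH1; apply: high_joinr => //; exact: negbT.
- ih IHeval1 hpc hb hS hH he b1 hb1 hs1 hS1 hH1 hv1.
  case hl: (lle l A).
  + have [e0 hr] := veq_low_inv hv1 hl; subst l0.
    by case: (req_inr_inl hr).
  + have hl0 := veq_high_inv hv1 (negbT hl).
    exists b1; split=> //; split=> //.
    apply: high_both H0 H10 _ _ hS1 hH1; apply: high_joinr => //; exact: negbT.
- ih IHeval1 hpc hb hS hH he b1 hb1 hs1 hS1 hH1 hv1.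
  case hl: (lle l A).
  + have [e0 hr] := veq_low_inv hv1 hl; subst l0.
    have hv := req_inr_inv hr.
    have hpl : lle (ljoin pc l) A by rewrite lle_join hpc hl.
    ih IHeval2 hpl hb1 hS1 hH1 (eeq_cons hv (eeq_mono hs1 he)) b2 hb2 hs2 hS2 hH2 hv2.
    exists b2; split=> //; split; first exact: bsub_trans hs1 hs2.
    by split=> //.
  + have hl0 := veq_high_inv hv1 (negbT hl).
    exists b1; split=> //; split=> //.
    apply: high_both H0 H10 _ _ hS1 hH1; apply: high_joinr => //; exact: negbT.
-
  ih IHeval1 hpc hb hS hH he b1 hb1 hs1 hS1 hH1 hv1.
  ih IHeval2 hpc hb1 hS1 hH1 (eeq_mono hs1 he) b2 hb2 hs2 hS2 hH2 hv2.
  exists b2; split=> //; split; first exact: bsub_trans hs1 hs2.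
  split=> //; split=> //; exact: veq_same (req_pair (veq_mono hs2 hv1) hv2).
-
  ih IHeval hpc hb hS hH he b1 hb1 hs1 hS1 hH1 hv1.
  fin b1 hb1; try done.
  case hl: (lle l A).
  + have [e0 hr] := veq_low_inv hv1 hl; subst l0.
    have [p1 p2] := req_pair_inv hr; exact: veq_vjoin.
  + have hl0 := veq_high_inv hv1 (negbT hl); apply: veq_vjoin_high => //; exact: negbT.
- ih IHeval hpc hb hS hH he b1 hb1 hs1 hS1 hH1 hv1.
  fin b1 hb1; try done.
  case hl: (lle l A).
  + have [e0 hr] := veq_low_inv hv1 hl; subst l0.
    have [p1 p2] := req_pair_inv hr; exact: veq_vjoin.
  + have hl0 := veq_high_inv hv1 (negbT hl); apply: veq_vjoin_high => //; exact: negbT.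
-
  ih IHeval hpc hb hS hH he b1 hb1 hs1 hS1 hH1 hv1.
  fin b1 hb1; try done.
  case hl: (lle l A).
  + have [e0 hr] := veq_low_inv hv1 hl; subst l0; exact: veq_same (req_label _ _ _).
  + have hl0 := veq_high_inv hv1 (negbT hl); apply: veq_high => //; exact: negbT.
-
  ih IHeval1 hpc hb hS hH he b1 hb1 hs1 hS1 hH1 hv1.
  ih IHeval2 hpc hb1 hS1 hH1 (eeq_mono hs1 he) b2 hb2 hs2 hS2 hH2 hv2.
  exists b2; split=> //; split; first exact: bsub_trans hs1 hs2.
  split=> //; split=> //.
  case hl1: (lle l1' A); last first.
    have hl0 := veq_high_inv hv1 (negbT hl1).
    apply: veq_high; apply: high_joinl => //; exact: negbT.
  case hl2: (lle l2' A); last first.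
    have hl0 := veq_high_inv hv2 (negbT hl2).
    apply: veq_high; apply: high_joinr => //; exact: negbT.
  have [e1' hr1] := veq_low_inv hv1 hl1; subst l1'0.
  have [e2' hr2] := veq_low_inv hv2 hl2; subst l2'0.
  rewrite (req_label_inv hr1) (req_label_inv hr2).
  apply: veq_same; case: (lle l1 l2).
  + exact: req_inl (veq_same _ (req_unit _ _)).
  + exact: req_inr (veq_same _ (req_unit _ _)).
-
  ih IHeval1 hpc hb hS hH he b1 hb1 hs1 hS1 hH1 hv1.
  case hl': (lle l' A).
  + have [e0 hr] := veq_low_inv hv1 hl'; subst l'0.
    have ee1 := req_label_inv hr; subst l0.
    case hl: (lle l A).
    * ih IHeval2 hl hb1 hS1 hH1 (eeq_mono hs1 he) b2 hb2 hs2 hS2 hH2 hv2.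
      exists b2; split=> //; split; first exact: bsub_trans hs1 hs2.
      by split=> //.
    * exists b1; split=> //; split=> //.
      apply: high_both H1 H11 _ _ hS1 hH1; exact: negbT.
  + have hl0 := veq_high_inv hv1 (negbT hl').
    exists b1; split=> //; split=> //.
    apply: high_both H1 H11 _ _ hS1 hH1.
    * exact: high_mono (negbT hl') H0.
    * exact: high_mono hl0 H10.
-
  ih IHeval hpc hb hS hH he b1 hb1 hs1 hS1 hH1 hv1.
  fin b1 hb1; try done.
  + case hl: (lle l A).
    * have [e0 hr] := veq_low_inv hv1 hl; subst l0.
      have [hsz _] := hS1 l hl.
      rewrite hsz; apply: store_eq_upd_low => //; by rewrite -hsz.
    * have hl0 := veq_high_inv hv1 (negbT hl).
      apply: store_eq_conf hS1 _ _; apply: sconf_upd_high => //; exact: negbT.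
  + case hl: (lle l A).
    * have [e0 hr] := veq_low_inv hv1 hl; subst l0.
      have [hsz _] := hS1 l hl.
      rewrite hsz; apply: veq_same; exact: req_refI_low.
    * have hl0 := veq_high_inv hv1 (negbT hl).
      apply: veq_same; apply: req_refI_high => //; exact: negbT.
-
  ih IHeval hpc hb hS hH he b1 hb1 hs1 hS1 hH1 hv1.
  fin b1 hb1; try done.
  case hl': (lle l' A); last first.
    have hl0 := veq_high_inv hv1 (negbT hl').
    apply: veq_high; apply: high_joinr => //; exact: negbT.
  have [e0 hr] := veq_low_inv hv1 hl'; subst l'0.
  case: (req_refI_inv hr) => [[ee1 [ee2 hl]]|[hl hl0]].
  + subst n0 l0; have [_ hm] := hS1 l hl.
    apply: veq_same; exact: hm H0 H8.
  + by apply: veq_high; apply: high_joinl.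
-
  ih IHeval1 hpc hb hS hH he b1 hb1 hs1 hS1 hH1 hv1.
  ih IHeval2 hpc hb1 hS1 hH1 (eeq_mono hs1 he) b2 hb2 hs2 hS2 hH2 hv2.
  exists b2; split=> //; split; first exact: bsub_trans hs1 hs2.
  split; last by split=> //; exact: veq_same (req_unit _ _).
  case hl: (lle l A).
  + have hl1 : lle l1 A := lle_trans H0 hl.
    have [e0 hr] := veq_low_inv hv1 hl1; subst l3.
    case: (req_refI_inv hr) => [[ee1 [ee2 _]]|[hl' _]]; last by rewrite hl in hl'.
    subst n0 l0.
    have hl2 : lle l2 A := lle_trans H2 hl.
    have [e3 hr2] := veq_low_inv hv2 hl2; subst l4.
    exact: store_eq_upd_low.
  + have hl0 : ~~ lle l0 A.
      case hl1: (lle l1 A).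
      * have [e0 hr] := veq_low_inv hv1 hl1; subst l3.
        case: (req_refI_inv hr) => [[ee1 [ee2 hl']]|[_ hl0]] //.
        by subst l0; rewrite hl in hl'.
      * have hl3 := veq_high_inv hv1 (negbT hl1); exact: high_mono hl3 H11.
    apply: store_eq_conf hS2 _ _; apply: sconf_upd_high => //; exact: negbT.
-
  ih IHeval hpc hb hS hH he b1 hb1 hs1 hS1 hH1 hv1.
  fin b1 hb1; try done.
  case hl': (lle l' A); last first.
    have hl0 := veq_high_inv hv1 (negbT hl').
    apply: veq_high; apply: high_joinr => //; exact: negbT.
  have [e0 hr] := veq_low_inv hv1 hl'; subst l'0.
  case: (req_refI_inv hr) => [[ee1 [ee2 hl]]|[hl hl0]].
  + subst n0 l0; exact: veq_same (req_label _ _ _).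
  + by apply: veq_high; apply: high_joinl.
-
  ih IHeval hpc hb hS hH he b1 hb1 hs1 hS1 hH1 hv1.
  have [hb' hs' hbn hH'] := heap_eq_alloc v v0 hb1 hH1 hv1.
  set b' := bext b1 (size mu1) (size mu2) in hb' hs' hbn hH'.
  exists b'; split=> //; split; first exact: bsub_trans hs1 hs'.
  split; first exact: store_eq_mono hs' hS1.
  split=> //; apply: veq_same; exact: req_addr.
-
  ih IHeval hpc hb hS hH he b1 hb1 hs1 hS1 hH1 hv1.
  fin b1 hb1; try done.
  case hl: (lle l A); last first.
    have hl0 := veq_high_inv hv1 (negbT hl).
    apply: veq_high; apply: high_joinl => //; exact: negbT.
  have [e0 hr] := veq_low_inv hv1 hl; subst l0.
  have hbn := req_addr_inv hr.
  have [x1 [x2 [f1 [f2 hx]]]] := hH1 _ _ hbn.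
  rewrite H0 in f1; rewrite H8 in f2; case: f1 => ?; case: f2 => ?; subst x1 x2.
  exact: veq_joinl.
-
  ih IHeval hpc hb hS hH he b1 hb1 hs1 hS1 hH1 hv1.
  fin b1 hb1; try done.
  case hl: (lle l1 A); last first.
    have hl0 := veq_high_inv hv1 (negbT hl).
    apply: veq_high; apply: high_joinl => //; exact: negbT.
  have [e0 hr] := veq_low_inv hv1 hl; subst l0.
  have hbn := req_addr_inv hr.
  have [x1 [x2 [f1 [f2 hx]]]] := hH1 _ _ hbn.
  rewrite H0 in f1; rewrite H8 in f2; case: f1 => ?; case: f2 => ?; subst x1 x2.
  case hl2: (lle l2 A).
  + have [ee1 _] := veq_low_inv hx hl2; subst l3; exact: veq_same (req_label _ _ _).
  + have hl3 := veq_high_inv hx (negbT hl2).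
    apply: veq_high; apply: high_joinr => //; exact: negbT.
-
  ih IHeval1 hpc hb hS hH he b1 hb1 hs1 hS1 hH1 hv1.
  ih IHeval2 hpc hb1 hS1 hH1 (eeq_mono hs1 he) b2 hb2 hs2 hS2 hH2 hv2.
  exists b2; split=> //; split; first exact: bsub_trans hs1 hs2.
  split=> //; split; last exact: veq_same (req_unit _ _).
  case hl: (lle l A).
  + have [e0 hr] := veq_low_inv hv1 hl; subst l0.
    have hbn := hs2 _ _ (req_addr_inv hr).
    apply: heap_eq_upd => //.
    exact: (veq_vjoin l hv2).
  + have hl0 := veq_high_inv hv1 (negbT hl).
    apply: heap_eq_conf hH2 _ _.
    * apply: hconf_upd_high; first exact: H1.
      - exact: high_mono (negbT hl) H2.
      - apply: high_joinr; exact: negbT.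
    * apply: hconf_upd_high; first exact: H12.
      - exact: high_mono hl0 H13.
      - exact: high_joinr.
Qed.
End NI2.

Theorem mainTheorem3 (disp : Order.disp_t) (L : latticeType disp) (A : L)
  (pc : L) (b : nat -> option nat) (c1 c2 : icfg L) (th1 th2 : env L)
  (c1' c2' : fcfg L) :
  pbij b ->
  cfg_valid c1 th1 -> cfg_valid c2 th2 ->
  icfg_eq A b c1 c2 -> eeq A b th1 th2 ->
  eval th1 pc c1 c1' -> eval th2 pc c2 c2' ->
  exists b', pbij b' /\ bsub b b' /\ fcfg_eq A b' c1' c2'.
Proof.
move=> hb _ _ hc he h1 h2.
case hpc: (lle pc A).
- exact: NI h1 hpc _ _ _ _ hb hc he h2.
- exists b; split=> //; split; first exact: bsub_refl.
  case: c1 hc h1 => S1 m1 e1; case: c2 h2 => S2 m2 e2 h2 [hS [hH _]] h1.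
  apply: high_both h1 h2 _ _ hS hH; by rewrite hpc.
Qed.
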